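(* Let $C=\{C_n,\partial_n\}_{n\geq 0}$ be a chain complex of abelian groups (with $\partial_0=0$ and $C_{-1}=0$), and let $D=\{D_n\}_{n\ge 0}$ and $D'=\{D'_n\}_{n\ge 0}$ be graded subgroups of $C$ with $D'_n\subseteq D_n\subseteq C_n$ for all $n$. Then the inclusion $\mathrm{Inf}(D,C)\hookrightarrow \mathrm{Sup}(D,C)$ induces a chain map $$\iota:\ \mathrm{Inf}(D,C)/\mathrm{Inf}(D',C)\longrightarrow \mathrm{Sup}(D,C)/\mathrm{Sup}(D',C),$$ and $\iota$ induces an isomorphism $\iota_*: H_*\big(\mathrm{Inf}(D,C)/\mathrm{Inf}(D',C)\big)\xrightarrow{\cong} H_*\big(\mathrm{Sup}(D,C)/\mathrm{Sup}(D',C)\big)$ in every degree.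
   Context: For a chain complex $C$ and a graded subgroup $D$ of $C$ (with $D_{-1}=0$), the infimum chain complex $\mathrm{Inf}(D,C)$ is given by $\mathrm{Inf}_n(D,C)=D_n\cap \partial_n^{-1}(D_{n-1})$ (the largest sub-chain complex of $C$ contained in $D$), and the supremum chain complex $\mathrm{Sup}(D,C)$ is given by $\mathrm{Sup}_n(D,C)=D_n+\partial_{n+1}(D_{n+1})$ (the smallest sub-chain complex of $C$ containing $D$). If $D'\subseteq D$, then $\mathrm{Inf}(D',C)\subseteq\mathrm{Inf}(D,C)\subseteq \mathrm{Sup}(D,C)$ and $\mathrm{Inf}(D',C)\subseteq\mathrm{Sup}(D',C)\subseteq\mathrm{Sup}(D,C)$ are sub-chain complexes. *)

(* Defs.v *)
(* Chain complexes of abelian groups are modelled as a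
   family of zmodTypes C n (n >= 0) with additive boundaries
   d n : C (n+1) -> C n (so d_0 : C_0 -> C_{-1} = 0 is implicit). *)
From HB Require Import structures.
From mathcomp Require Import all_boot all_algebra.
Unset Printing Implicit Defensive.
Import GRing.Theory.
Local Open Scope ring_scope.

Section ChainDefs.
Variable C : nat -> zmodType.
Variable d : forall n, {additive C n.+1 -> C n}.

Definition graded := forall n, C n -> Prop.

Definition is_subgroup (G : zmodType) (S : G -> Prop) : Prop :=
  S 0 /\ forall x y, S x -> S y -> S (x - y).

Definition graded_subgroup (D : graded) : Prop := forall n, is_subgroup (C n) (D n).

Definition graded_incl (A B : graded) : Prop := forall n x, A n x -> B n x.

Definition is_subcomplex (A : graded) : Prop :=
  graded_subgroup A /\ forall n x, A n.+1 x -> A n (d n x).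

(* Inf_n(D,C) = D_n ∩ ∂_n^{-1}(D_{n-1}),  with D_{-1} = 0 and ∂_0 = 0 *)
Definition Inf (D : graded) : graded := fun n =>
  match n as k return C k -> Prop with
  | 0 => fun x => D 0 x
  | m.+1 => fun x => D m.+1 x /\ D m (d m x)
  end.

Definition Sup (D : graded) : graded := fun n x =>
  exists y z, D n y /\ D n.+1 z /\ x = y + d n z.

(* For sub-chain complexes B ⊆ A of C, the quotient complex A/B.
   Cycles of A/B in degree n, lifted to A_n: x ∈ A_n with ∂x ∈ B_{n-1}. *)
Definition rel_cycle (A B : graded) : graded := fun n =>
  match n as k return C k -> Prop with
  | 0 => fun x => A 0 x
  | m.+1 => fun x => A m.+1 x /\ B m (d m x)
  end.

(* Boundaries of A/B in degree n, lifted to A_n: ∂(A_{n+1}) + B_n. *)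
Definition rel_boundary (A B : graded) : graded := fun n x =>
  exists y z, A n.+1 y /\ B n z /\ x = d n y + z.

(* H_n(A/B) = rel_cycle A B n / rel_boundary A B n.
   The chain map A/B -> A'/B' induced by the inclusions A ⊆ A', B ⊆ B'
   (identity on representatives) induces a well-defined group
   isomorphism H_n(A/B) -> H_n(A'/B') in degree n.  Spelled out on
   representatives: it maps cycles to cycles and boundaries to
   boundaries (well-defined homomorphism), its kernel is trivial
   (injective) and every class is hit (surjective). *)
Definition induces_homology_iso_at (A B A' B' : graded) (n : nat) : Prop :=
  [/\ forall x : C n, rel_cycle A B n x -> rel_cycle A' B' n x,
      forall x : C n, rel_boundary A B n x -> rel_boundary A' B' n x,
      forall x : C n, rel_cycle A B n x -> rel_boundary A' B' n x ->
                rel_boundary A B n x &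
      forall y : C n, rel_cycle A' B' n y ->
        exists x, rel_cycle A B n x /\ rel_boundary A' B' n (y - x)].

End ChainDefs.

(* Main.v *)
Require Import Defs.
From HB Require Import structures.
From mathcomp Require Import all_boot all_algebra.
Import GRing.Theory.
Local Open Scope ring_scope.
Section H.
Variable G : zmodType.
Variable S : G -> Prop.
Hypothesis hS : is_subgroup G S.
Lemma sg0 : S 0. Proof. by case: hS. Qed.
Lemma sgB x y : S x -> S y -> S (x - y). Proof. by case: hS => _ h; apply: h. Qed.
Lemma sgN x : S x -> S (- x). Proof. by move=> h; rewrite -sub0r; apply: sgB => //; apply: sg0. Qed.
Lemma sgD x y : S x -> S y -> S (x + y).
Proof. by move=> hx hy; rewrite -(opprK y); apply: sgB => //; apply: sgN. Qed.
End H.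
Arguments sg0 {G S}. Arguments sgB {G S}. Arguments sgN {G S}. Arguments sgD {G S}.

Theorem lemma1p1 (C : nat -> zmodType) (d : forall n, {additive C n.+1 -> C n})
  (dd0 : forall n (x : C n.+2), d n (d n.+1 x) = 0)
  (D D' : graded C)
  (hD : graded_subgroup C D) (hD' : graded_subgroup C D')
  (hD'D : graded_incl C D' D) :
  [/\ is_subcomplex C d (Inf C d D), is_subcomplex C d (Inf C d D'),
      is_subcomplex C d (Sup C d D), is_subcomplex C d (Sup C d D') &
    [/\ graded_incl C (Inf C d D') (Inf C d D), graded_incl C (Inf C d D) (Sup C d D),
        graded_incl C (Inf C d D') (Sup C d D'), graded_incl C (Sup C d D') (Sup C d D) &
    forall n, induces_homology_iso_at C d (Inf C d D) (Inf C d D') (Sup C d D) (Sup C d D') n]].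
Proof.
have infE : forall E n (v : C n), Inf C d E n v -> E n v by move=> E [|m] v //= [].
have supD : forall E, graded_subgroup C E -> forall n (v : C n), E n v -> Sup C d E n v.
  move=> E hE n v hv; exists v, 0; rewrite raddf0 addr0; split=> //; split=> //; exact: (sg0 (hE _)).
have infd : forall E, graded_subgroup C E -> forall m (v : C m.+1), E m (d m v) -> Inf C d E m (d m v).
  move=> E hE [|m] v //= h; split=> //; rewrite dd0; exact: (sg0 (hE _)).
have infsub : forall E, graded_subgroup C E -> is_subcomplex C d (Inf C d E).
  move=> E hE; split.
    case=> [|m]; split => /=.
    - exact: (sg0 (hE _)).
    - by move=> x y; apply: (sgB (hE _)).
    - by rewrite raddf0; split; apply: (sg0 (hE _)).
    - move=> x y [hx1 hx2] [hy1 hy2]; split; first exact: (sgB (hE _)).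
      by rewrite raddfB; apply: (sgB (hE _)).
  case=> [|m] x /= [h1 h2] //; split=> //; rewrite dd0; exact: (sg0 (hE _)).
have supsub : forall E, graded_subgroup C E -> is_subcomplex C d (Sup C d E).
  move=> E hE; split.
    move=> n; split.
      by exists 0, 0; rewrite raddf0 addr0; repeat split=> //; apply: (sg0 (hE _)).
    move=> x y [x1 [x2 [h1 [h2 ->]]]] [y1 [y2 [k1 [k2 ->]]]].
    exists (x1 - y1), (x2 - y2); split; first exact: (sgB (hE _)).
    split; first exact: (sgB (hE _)).
    by rewrite raddfB opprD addrACA.
  move=> n x [y [z [h1 [h2 ->]]]]; exists 0, y.
  by rewrite raddfD dd0 addr0 add0r; repeat split=> //; apply: (sg0 (hE _)).
have infsup : forall E, graded_subgroup C E -> graded_incl C (Inf C d E) (Sup C d E).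
  move=> E hE n x hx; exists x, 0; rewrite raddf0 addr0; split=> //; last by repeat split=> //; apply: (sg0 (hE _)).
  by case: n x hx => [|m] x //= [].
split; try (apply: infsub || apply: supsub; assumption).
split.
- case=> [|m] x /=; first exact: hD'D.
  by case=> h1 h2; split; apply: hD'D.
- exact: infsup.
- exact: infsup.
- move=> n x [y [z [h1 [h2 ->]]]]; exists y, z; split; first exact: hD'D.
  by split=> //; apply: hD'D.
move=> n; split.
- case: n => [|m] x /=; first by move=> h; apply: infsup.
  case=> h1 h2; split; first exact: (infsup D hD m.+1 x h1).
  exact: (infsup D' hD' m _ h2).
- move=> x [y [z [h1 [h2 ->]]]]; exists y, z; split; first exact: infsup.
  by split=> //; apply: infsup.
- case: n => [|m] x hx [y [z [[y1 [y2 [hy1 [hy2 ey]]]] [[z1 [z2 [hz1 [hz2 ez]]]] ex]]]].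
    have e : x = d 0 (y1 + z2) + z1 by rewrite ex ey ez !raddfD dd0 addr0 [z1 + _]addrC addrA.
    exists (y1 + z2), z1; split => //=.
    split; first exact: (sgD (hD _) _ _ hy1 (hD'D _ _ hz2)).
    have -> : d 0 (y1 + z2) = x - z1 by rewrite e addrK.
    exact: (sgB (hD _) _ _ hx (hD'D _ _ hz1)).
  have e : x = d m.+1 (y1 + z2) + z1 by rewrite ex ey ez !raddfD dd0 addr0 [z1 + _]addrC addrA.
  case: hx => [[hx1 hx2] hx3].
  exists (y1 + z2), z1; split => //=.
    split; first exact: (sgD (hD _) _ _ hy1 (hD'D _ _ hz2)).
    have -> : d m.+1 (y1 + z2) = x - z1 by rewrite e addrK.
    exact: (sgB (hD _) _ _ hx1 (hD'D _ _ hz1)).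
  have -> : d m z1 = d m x by rewrite e raddfD dd0 add0r.
  by split => //; split; [exact: hz1 | exact: (infE D' m _ hx3)].
- case: n => [|m].
    move=> y [y1 [y2 [hy1 [hy2 ey]]]].
    exists y1; split => //.
    exists y2, 0; split; first exact: supD.
    split; first by apply: supD => //; apply: (sg0 (hD' _)).
    by rewrite ey addr0 addrAC subrr add0r.
  move=> y [[y1 [y2 [hy1 [hy2 ey]]]] [w1 [w2 [hw1 [hw2 ew]]]]].
  have edx : d m (y1 - w2) = w1.
    by move: ew; rewrite ey raddfD dd0 addr0 raddfB => ->; rewrite addrK.
  exists (y1 - w2); split.
    split; first split.
    + exact: (sgB (hD _) _ _ hy1 (hD'D _ _ hw2)).
    + by rewrite edx; apply: hD'D.
    + apply: infd => //; rewrite edx //.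
  exists y2, w2; split; first exact: supD.
  split; first exact: supD.
  by rewrite ey opprB addrC addrA subrK addrC.
Qed.
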